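(* Let $p$ be an odd prime and $k\ge1$. Then $\mathcal{N}_{p^k}$ is a grounded tree with root $0$ and $p^{k-1}$ vertices, described as follows. (i) The vertices other than $0$ that have an edge to $0$ are exactly the residues $x=y\,p^\ell$ with $\lceil k/2\rceil\le \ell<k$, $1\le y\le p^{k-\ell}$ and $\gcd(y,p)=1$. (ii) For every nonzero $x\in\mathcal{N}_{p^k}$, write $x=\tilde x\,p^\ell$ with $1\le\ell<k$ and $\gcd(\tilde x,p)=1$, and let $\hat x\in\{1,\dots,p-1\}$ be $\tilde x\bmod p$. Then the in-tree of $x$ is isomorphic, as a rooted tree with root $x$, to $\mathcal{T}_p(\hat x,\ell)$. In particular, the subtree hanging off $0$ at the in-neighbour $y\,p^\ell$ from (i) is $\mathcal{T}_p(y \bmod p,\ \ell)$.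
   Context: $\mathcal{G}_{n}$ is the directed graph on $\{0,\dots,n-1\}$ with an edge $x\to x^2\bmod n$ for each $x$. $\mathcal{N}_{p^k}$ is the subgraph of $\mathcal{G}_{p^k}$ induced on the multiples of $p$ (the nilpotent residues). A grounded tree is a finite directed graph with all out-degrees one, a root carrying a loop, which is a tree after deleting the loop and in which every vertex has a directed path to the root. For a non-periodic vertex $x$, the in-tree of $x$ is the subgraph induced on all vertices $y$ with $f^j(y)=x$ for some $j\ge0$, where $f(y)=y^2\bmod p^k$. It is a rooted tree with root $x$ and edges directed toward the root. For $a\in\{1,\dots,p-1\}$ and $\ell\ge1$, the rooted tree $\mathcal{T}_p(a,\ell)$ (edges directed toward the root) is defined recursively on $\ell$: (1) if $\ell$ is odd, $\mathcal{T}_p(a,\ell)$ is a single vertex; (2) if $\ell$ is even and $a$ is not a square mod $p$, $\mathcal{T}_p(a,\ell)$ is a single vertex; (3) if $\ell$ is even and $a\equiv z_1^2\equiv z_2^2\pmod p$ with $z_1\neq z_2$ in $\{1,\dots,p-1\}$, then $\mathcal{T}_p(a,\ell)$ is a root with exactly $2p^{\ell/2}$ children. The subtrees rooted at $p^{\ell/2}$ of these children are copies of $\mathcal{T}_p(z_1,\ell/2)$, and the subtrees rooted at the other $p^{\ell/2}$ children are copies of $\mathcal{T}_p(z_2,\ell/2)$. *)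

(* Defs.v *)
From Stdlib Require List.
From mathcomp Require Import all_boot.

Set Implicit Arguments.
Unset Strict Implicit.
Unset Printing Implicit Defensive.

(* The squaring map on residues mod n: the edge x -> x^2 mod n of G_n. *)
Definition sqmod (n x : nat) : nat := (x ^ 2) %% n.

Definition Gverts (n : nat) : seq nat := iota 0 n.

(* Vertex list of N_{p^k}: the multiples of p in {0,...,p^k-1}. *)
Definition Nverts (p k : nat) : seq nat := [seq x <- iota 0 (p ^ k) | p %| x].

(* The induced subgraph on vs of the graph with edges x -> f x has edge set
   { (x, f x) | x in vs, f x in vs }.  After deleting the loop at the root r,
   the (undirected, multi-)edges are indexed by their tails e in vs, e != r,
   joining e and f e. *)

Definition ujoins (f : nat -> nat) (e u v : nat) : bool :=
  ((e == u) && (f e == v)) || ((e == v) && (f e == u)).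

Definition uadj (vs : seq nat) (f : nat -> nat) (r : nat) (u v : nat) : bool :=
  has (fun e => (e != r) && ujoins f e u v) vs.

Definition uconnected (vs : seq nat) (f : nat -> nat) (r : nat) : Prop :=
  forall u v, u \in vs -> v \in vs ->
    exists s : seq nat, path (uadj vs f r) u s /\ last u s = v.

(* A cycle of the multigraph: m >= 1 distinct vertices and m distinct edges,
   edge i joining vertex i and vertex (i+1 mod m). *)
Definition has_ucycle (vs : seq nat) (f : nat -> nat) (r : nat) : Prop :=
  exists (cv ce : seq nat),
    [/\ 0 < size cv, size ce = size cv, uniq cv /\ uniq ce,
        all (fun v => v \in vs) cv && all (fun e => (e \in vs) && (e != r)) ce &
        forall i, i < size cv ->
          ujoins f (nth 0 ce i) (nth 0 cv i) (nth 0 cv ((i.+1) %% size cv))].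

Definition is_tree_minus_loop (vs : seq nat) (f : nat -> nat) (r : nat) : Prop :=
  uconnected vs f r /\ ~ has_ucycle vs f r.

(* Grounded tree: all out-degrees one (in the induced subgraph), root r with a loop,
   a tree after deleting the loop, and every vertex has a directed path to r. *)
Definition grounded_tree (vs : seq nat) (f : nat -> nat) (r : nat) : Prop :=
  [/\ uniq vs,
      forall x, x \in vs -> f x \in vs,
      r \in vs /\ f r = r,
      is_tree_minus_loop vs f r &
      forall x, x \in vs -> exists j, iter j f x = r].

Inductive rtree : Type := RNode of seq rtree.

(* [realizes n f y t]: the in-tree of y in G_n (edges c -> f c, f = squaring mod n)
   is isomorphic, as a rooted tree with root y, to t.  The children of y are
   the in-neighbours c < n with f c = y, put in bijection (via the ordering cs)
   with the children of t, recursively. *)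
Fixpoint realizes (n : nat) (f : nat -> nat) (y : nat) (t : rtree) {struct t} : Prop :=
  let: RNode ts := t in
  exists cs : seq nat,
    [/\ uniq cs,
        (forall c, (c \in cs) = (c < n) && (f c == y)) &
        (fix r2 (cs : seq nat) (ts : seq rtree) {struct ts} : Prop :=
           match cs, ts with
           | [::], [::] => True
           | c :: cs', t' :: ts' => realizes n f c t' /\ r2 cs' ts'
           | _, _ => False
           end) cs ts].

Inductive is_Tp (p : nat) : nat -> nat -> rtree -> Prop :=
| Tp_odd a l : odd l -> is_Tp p a l (RNode [::])
| Tp_nonsq a l : ~~ odd l -> ~ (exists z, z ^ 2 = a %[mod p]) ->
    is_Tp p a l (RNode [::])
| Tp_sq a l z1 z2 (ts1 ts2 : seq rtree) :
    ~~ odd l -> 0 < l ->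
    0 < z1 < p -> 0 < z2 < p -> z1 != z2 ->
    z1 ^ 2 = a %[mod p] -> z2 ^ 2 = a %[mod p] ->
    size ts1 = p ^ (l./2) -> size ts2 = p ^ (l./2) ->
    (forall t, List.In t ts1 -> is_Tp p z1 (l./2) t) ->
    (forall t, List.In t ts2 -> is_Tp p z2 (l./2) t) ->
    is_Tp p a l (RNode (ts1 ++ ts2)).

(* Main.v *)
Require Import Defs.
From mathcomp Require Import all_boot zify.
From Stdlib Require Classical_Prop.
Set Implicit Arguments.
Unset Strict Implicit.

Lemma ujoinsC f e u v : ujoins f e u v = ujoins f e v u.
Proof. by rewrite /ujoins orbC. Qed.

Lemma uadjC vs f r u v : uadj vs f r u v = uadj vs f r v u.
Proof. by rewrite /uadj; apply: eq_has => e; rewrite ujoinsC. Qed.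

Definition uconn vs f r u v := exists s, path (uadj vs f r) u s /\ last u s = v.

Lemma uconn_sym vs f r u v : uconn vs f r u v -> uconn vs f r v u.
Proof.
move=> [s [Hp Hl]]; exists (rev (belast u s)); split.
  have := rev_path (uadj vs f r) u s; rewrite Hl => ->.
  by apply: sub_path Hp => a b; rewrite uadjC.
by rewrite -Hl; case: s {Hp Hl} => //= a s; rewrite rev_cons last_rcons.
Qed.

Lemma uconn_trans vs f r u v w : uconn vs f r u v -> uconn vs f r v w -> uconn vs f r u w.
Proof.
move=> [s [Hp Hl]] [t [Hq Hm]]; exists (s ++ t); split.
  by rewrite cat_path Hp Hl Hq.
by rewrite last_cat Hl.
Qed.

Lemma uconn_root vs f r j u : (forall x, x \in vs -> f x \in vs) ->
  u \in vs -> iter j f u = r -> uconn vs f r u r.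
Proof.
move=> Hcl; elim: j u => [|j IH] u Hu.
  by move=> <-; exists [::].
case: (eqVneq u r) => [-> _|Hne]; first by exists [::].
rewrite iterSr => /(IH _ (Hcl _ Hu)) [s [Hp Hl]].
exists (f u :: s); split => //=; rewrite Hp andbT.
by apply/hasP; exists u => //; rewrite Hne /ujoins !eqxx.
Qed.

Lemma generic_tree vs f r :
  (forall x, x \in vs -> f x \in vs) -> r \in vs -> f r = r ->
  (forall x, x \in vs -> exists j, iter j f x = r) ->
  is_tree_minus_loop vs f r.
Proof.
move=> Hcl Hr Hfr Hreach; split.
  move=> u v Hu Hv.
  have [ju Hju] := Hreach _ Hu; have [jv Hjv] := Hreach _ Hv.
  change (uconn vs f r u v); apply: uconn_trans (uconn_root Hcl Hu Hju) _.
  exact: uconn_sym (uconn_root Hcl Hv Hjv).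
pose P x := fun j => iter j f x == r.
have ex x : x \in vs -> exists j, P x j by move=> /Hreach [j Hj]; exists j; apply/eqP.
pose d x := if (x \in vs) =P true is ReflectT H then ex_minn (ex x H) else 0.
have dE x e : x \in vs -> e \in vs -> e != r -> f e = x -> d e = (d x).+1.
  move=> Hx He Hne Hfe; rewrite /d.
  case: eqP => // He'; case: eqP => // Hx'.
  case: ex_minnP => a /eqP Ha Ham; case: ex_minnP => b /eqP Hb Hbm.
  have Hb1 : P e b.+1 by rewrite /P iterSr Hfe Hb.
  have := Ham _ Hb1.
  case: a Ha Ham => [/= Ha|a Ha Ham]; first by rewrite Ha eqxx in Hne.
  rewrite iterSr Hfe in Ha.
  have := Hbm _ (introT eqP Ha). lia.
move=> [cv [ce [Hsz Hsze [Hucv Huce] /andP [Hacv Hace] Hj]]].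
set m := size cv in Hsz Hsze Hj.
have inv i : i < m -> nth 0 cv i \in vs by move=> Hi; apply: (allP Hacv); apply: mem_nth.
have ince i : i < m -> (nth 0 ce i \in vs) && (nth 0 ce i != r).
  by move=> Hi; apply: (allP Hace); apply: mem_nth; rewrite Hsze.
have [j Hjm Hmax] : exists2 j, j < m & forall i, i < m -> d (nth 0 cv i) <= d (nth 0 cv j).
  pose j := [arg max_(i > Ordinal Hsz) d (nth 0 cv i)].
  exists j; first exact: ltn_ord.
  move=> i Hi; rewrite /j; case: arg_maxnP => // i0 _ H.
  exact: (H (Ordinal Hi)).
have tail i : i < m -> forall a b, ujoins f (nth 0 ce i) a b -> a \in vs -> b \in vs ->
   d b <= d a -> nth 0 ce i = a.
  move=> Hi a b /orP [/andP [/eqP -> _]|/andP [/eqP Heb /eqP Hfe]] Ha Hb Hd //.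
  have /andP [He Hne] := ince _ Hi.
  rewrite Heb in He Hne Hfe.
  have := dE _ _ Ha He Hne Hfe; lia.
have m0 : 0 < m by [].
have Hj1 : (j.+1 %% m) < m by rewrite ltn_mod.
have e1 : nth 0 ce j = nth 0 cv j.
  apply: (tail _ Hjm _ (nth 0 cv (j.+1 %% m))) => //; [exact: Hj|exact: inv|exact: inv|exact: Hmax].
pose i := (j + m).-1 %% m.
have Hi : i < m by rewrite ltn_mod.
have Hij : i.+1 %% m = j.
  rewrite /i -addn1 modnDml addn1 prednK; last lia.
  by rewrite modnDr modn_small.
have e2 : nth 0 ce i = nth 0 cv j.
  apply: (tail _ Hi _ (nth 0 cv i)) => //; [rewrite ujoinsC -{1}Hij; exact: Hj|exact: inv|exact: inv|exact: Hmax].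
have Hij' : i = j.
  apply/eqP; rewrite -(nth_uniq 0 _ _ Huce) ?Hsze // e1 e2 //.
rewrite Hij' in Hij; move: (Hj _ Hjm); rewrite Hij e1 /ujoins orbb => /andP [_ /eqP Hf].
have /andP [He Hne] := ince _ Hjm; rewrite e1 in He Hne.
have := dE _ _ He He Hne Hf; lia.
Qed.

Lemma iter_sq n j x : iter j.+1 (sqmod n) x = x ^ (2 ^ j.+1) %% n.
Proof.
elim: j => [|j IH]; first by [].
by rewrite iterS IH /sqmod modnXm -expnM (expnS 2 j.+1) mulnC.
Qed.

Lemma count_mod d r n : r < d -> count (fun z => z %% d == r) (iota 0 (d * n)) = n.
Proof.
move=> Hr; elim: n => [|n IH]; first by rewrite muln0.
rewrite mulnS addnC iotaD count_cat IH add0n.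
rewrite -{1}(addn0 (d * n)) iotaDl count_map.
rewrite (eq_in_count (a2 := pred1 r)); last first.
  move=> z; rewrite mem_iota => /andP [_ Hz] /=.
  by rewrite mulnC modnMDl modn_small.
by rewrite count_uniq_mem ?iota_uniq // mem_iota Hr addn1.
Qed.

Lemma size_Nverts p k : 0 < p -> 1 <= k -> size (Nverts p k) = p ^ (k - 1).
Proof.
move=> Hp Hk; rewrite /Nverts size_filter.
have -> : p ^ k = p * p ^ (k - 1) by rewrite -expnS; congr (_ ^ _); lia.
rewrite -[RHS](count_mod (p ^ (k-1)) Hp); apply: eq_count => z /=.
by rewrite /dvdn.
Qed.

Lemma logn_cop p w j : prime p -> coprime w p -> logn p (w * p ^ j) = j.
Proof.
move=> Pp Hc.
have w0 : 0 < w.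
  case: w Hc => // ; rewrite /coprime gcd0n => /eqP H; by rewrite H in Pp.
rewrite lognM; [|exact: w0|by rewrite expn_gt0 prime_gt0].
by rewrite logn_coprime ?pfactorK // coprime_sym.
Qed.

Lemma sq_mul p k z m : 0 < p -> m.*2 <= k ->
  (z * p ^ m) ^ 2 %% p ^ k = (z ^ 2 %% p ^ (k - m.*2)) * p ^ m.*2.
Proof.
move=> Hp Hm.
by rewrite muln_modl -expnD subnK // expnMn -expnM muln2.
Qed.

Lemma cop_pos p w : prime p -> coprime w p -> 0 < w.
Proof. move=> Pp; case: w => //; rewrite /coprime gcd0n => /eqP H; by rewrite H in Pp. Qed.

Lemma cop_modp p e w : prime p -> 0 < e -> coprime w p -> coprime (w %% p ^ e) p.
Proof.
move=> Pp He Hw.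
have Hd : p %| p ^ e by rewrite dvdn_exp.
rewrite coprime_sym prime_coprime // /dvdn (modn_dvdm _ Hd) -/(dvdn p w).
by rewrite -prime_coprime // coprime_sym.
Qed.

Lemma val_sq p k xt l c : prime p -> l < k -> coprime xt p -> c ^ 2 %% p ^ k = xt * p ^ l ->
  exists2 z, coprime z p & [/\ l = (l./2).*2, c = z * p ^ (l./2) & z ^ 2 %% p ^ (k - l) = xt].
Proof.
move=> Pp Hlk Hxt H.
have p0 := prime_gt0 Pp.
have xt0 := cop_pos Pp Hxt.
have Hpos : 0 < xt * p ^ l by rewrite muln_gt0 xt0 expn_gt0 p0.
have c0 : 0 < c by case: c H => //; rewrite exp0n // mod0n => H; rewrite -H in Hpos.
have [z Hz Hc] := pfactor_coprime Pp c0.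
set m := logn p c in Hc.
rewrite coprime_sym in Hz.
case: (leqP k m.*2) => Hkm.
  have : p ^ k %| c ^ 2.
    by rewrite Hc expnMn -expnM dvdn_mull // dvdn_exp2l // muln2.
  by rewrite /dvdn H => /eqP H0; rewrite H0 in Hpos.
rewrite Hc sq_mul // in H; last exact: ltnW.
have Hw : coprime (z ^ 2 %% p ^ (k - m.*2)) p.
  by apply: cop_modp => //; [lia | rewrite coprime_pexpl].
have Hl := congr1 (logn p) H; rewrite !logn_cop // in Hl.
have Hm : l./2 = m by lia.
exists z => //; split => //; first lia.
  by rewrite Hm.
have pl : 0 < p ^ l by rewrite expn_gt0 p0.
by apply/eqP; rewrite -(eqn_pmul2r pl) -H -Hl.
Qed.

Lemma sq_uniq_le p e z w : prime p -> odd p -> coprime z p -> w <= z ->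
  z = w %[mod p] -> z ^ 2 = w ^ 2 %[mod p ^ e] -> z = w %[mod p ^ e].
Proof.
move=> Pp Op Hz Hwz Hp He.
apply/eqP; rewrite eqn_mod_dvd //.
move/eqP: He; rewrite eqn_mod_dvd ?leq_exp2r // subn_sqr Gauss_dvdl //.
apply: coprimeXl; rewrite prime_coprime //; apply/negP => Hd.
have : p %| z * 2.
  by move: Hd; rewrite /dvdn -modnDm -Hp modnDm addnn -mul2n mulnC.
rewrite Euclid_dvdM // => /orP [Hd'|Hd'].
  by move: Hz; rewrite coprime_sym prime_coprime // Hd'.
have := dvdn_leq (isT : 0 < 2) Hd'; have := prime_gt1 Pp.
by case: p Pp Op {Hz Hp Hd Hd'} => [|[|[|]]].
Qed.

Lemma sq_uniq p e z w : prime p -> odd p -> coprime z p ->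
  z = w %[mod p] -> z ^ 2 = w ^ 2 %[mod p ^ e] -> z = w %[mod p ^ e].
Proof.
move=> Pp Op Hz Hp He.
case: (leqP w z) => H; first exact: sq_uniq_le.
have Hw : coprime w p by rewrite -coprime_modl -Hp coprime_modl.
by apply/esym; apply: sq_uniq_le => //; exact: ltnW.

Qed.

Lemma pe_split p e : 0 < e -> p ^ e = p * p ^ (e - 1).
Proof. by move=> He; rewrite -expnS; congr (_ ^ _); lia. Qed.

Lemma hensel p e z1 a : prime p -> odd p -> 0 < e -> coprime z1 p -> z1 < p ->
  a < p ^ e -> a %% p = z1 ^ 2 %% p ->
  exists2 s, s < p ^ e & s %% p = z1 /\ s ^ 2 %% p ^ e = a.
Proof.
move=> Pp Op He Hz1 Hz1p Ha Hap.
have p0 := prime_gt0 Pp.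
have Hd : p %| p ^ e by rewrite dvdn_exp.
pose U := [seq z <- iota 0 (p ^ e) | z %% p == z1].
pose V := [seq w <- iota 0 (p ^ e) | w %% p == z1 ^ 2 %% p].
pose f z := z ^ 2 %% p ^ e.
have sU : size U = p ^ (e - 1).
  by rewrite size_filter (pe_split p He); apply: count_mod.
have sV : size V = p ^ (e - 1).
  by rewrite size_filter (pe_split p He); apply: count_mod; rewrite ltn_mod.
have uM : uniq (map f U).
  rewrite map_inj_in_uniq ?filter_uniq ?iota_uniq //.
  move=> z w; rewrite !mem_filter !mem_iota /= => /andP [/eqP Hz Hzr] /andP [/eqP Hw Hwr] Hf.
  have Hzc : coprime z p by rewrite -coprime_modl Hz.
  have := sq_uniq Pp Op Hzc (etrans Hz (esym Hw)) Hf.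
  by rewrite !modn_small //; lia.
have sMV : {subset map f U <= V}.
  move=> y /mapP [z]; rewrite mem_filter mem_iota => /andP [/eqP Hz _] ->.
  rewrite mem_filter mem_iota /= /f ltn_mod expn_gt0 p0 andbT.
  by rewrite (modn_dvdm _ Hd) -modnXm Hz.
have Hsz : size V <= size (map f U) by rewrite size_map sU sV.
have [_ Heq] := uniq_min_size uM sMV Hsz.
have : a \in V by rewrite mem_filter mem_iota Hap eqxx Ha.
rewrite -Heq => /mapP [s]; rewrite mem_filter mem_iota => /andP [/eqP Hs /andP [_ Hsl]] Hfs.
by exists s.
Qed.

Lemma dvd_small p n : p %| n -> 0 < n < p.*2 -> n = p.
Proof.
move=> /dvdnP [q ->] H.
have : 0 < q < 2 by nia.
by case: q {H} => [|[|]] //; rewrite mul1n.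
Qed.

Lemma dvd_small0 p n : p %| n -> n < p -> n = 0.
Proof. by move=> /dvdnP [q ->] H; case: q H => // q; rewrite mulSn; lia. Qed.

Lemma sq_neg p z1 : z1 <= p -> (p - z1) ^ 2 = z1 ^ 2 %[mod p].
Proof.
move=> H.
have E : (2 * z1) * p + (p - z1) ^ 2 = p * p + z1 ^ 2 by nia.
by rewrite -(modnMDl (2 * z1)) E modnMDl.
Qed.

Lemma two_roots p z1 r : prime p -> 0 < z1 < p -> r < p ->
  r ^ 2 = z1 ^ 2 %[mod p] -> r = z1 \/ r = p - z1.
Proof.
move=> Pp Hz Hr.
wlog Hle : r z1 Hz Hr / z1 <= r.
  move=> W H; case: (leqP z1 r) => Hc; first exact: W.
  case: (ltnP 0 r) => r0.
    have [->|E] := W z1 r (introT andP (conj r0 Hr)) (proj2 (andP Hz)) (ltnW Hc) (esym H).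
      by left.
    right; lia.
  have : p %| z1 ^ 2.
    move/eqP: H; rewrite eq_sym eqn_mod_dvd ?leq_exp2r ?(ltnW Hc) //.
    by move: r0; rewrite leqn0 => /eqP ->; rewrite subn0.
  rewrite Euclid_dvdM // orbb => /dvd_small0; lia.
move/eqP; rewrite eqn_mod_dvd ?leq_exp2r // subn_sqr Euclid_dvdM // => /orP [H|H].
  left; have := dvd_small0 H; lia.
right; have := dvd_small H; lia.
Qed.

Definition r2 (n : nat) (f : nat -> nat) :=
  fix r2 (cs : seq nat) (ts : seq rtree) {struct ts} : Prop :=
  match cs, ts with
  | [::], [::] => True
  | c :: cs', t' :: ts' => realizes n f c t' /\ r2 cs' ts'
  | _, _ => False
  end.

Lemma r2_cons n f c cs t ts : r2 n f (c :: cs) (t :: ts) = (realizes n f c t /\ r2 n f cs ts).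
Proof. by []. Qed.
Lemma r2_nil n f : r2 n f [::] [::] = True.
Proof. by []. Qed.

Lemma realizesE n f y ts : realizes n f y (RNode ts) =
  exists cs : seq nat, [/\ uniq cs, (forall c, (c \in cs) = (c < n) && (f c == y)) & r2 n f cs ts].
Proof. reflexivity. Qed.

Lemma r2_cat n f cs1 cs2 ts1 ts2 : r2 n f cs1 ts1 -> r2 n f cs2 ts2 -> r2 n f (cs1 ++ cs2) (ts1 ++ ts2).
Proof.
elim: cs1 ts1 => [|c cs IH] [|t ts] //; rewrite r2_cons => [[H1 H2]] H3.
by rewrite !cat_cons r2_cons; split => //; apply: IH.
Qed.

Lemma build n f (P : rtree -> Prop) cs :
  (forall c, c \in cs -> exists t, P t /\ realizes n f c t) ->
  exists ts, [/\ size ts = size cs, (forall t, List.In t ts -> P t) & r2 n f cs ts].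
Proof.
elim: cs => [|c cs IH] H; first by exists [::].
have [t [Pt Rt]] := H c (mem_head _ _).
have [ts [Hs HP Hr]] : exists ts, [/\ size ts = size cs, (forall t, List.In t ts -> P t) & r2 n f cs ts].
  by apply: IH => c' Hc'; apply: H; rewrite in_cons Hc' orbT.
exists (t :: ts); split; [by rewrite /= Hs| |by rewrite r2_cons].
by move=> t' [<-|]; [|apply: HP].
Qed.

Lemma no_children p k l x xt c : prime p -> l < k -> 0 < l -> coprime xt p -> x = xt * p ^ l ->
  (odd l \/ ~ (exists z, z ^ 2 = xt %% p %[mod p])) -> sqmod (p ^ k) c != x.
Proof.
move=> Pp Hlk Hl Hxt Hx Hc; apply/eqP => H.
rewrite /sqmod Hx in H.
have [z Hz [E _ Hz2]] := val_sq Pp Hlk Hxt H.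
case: Hc => [Ho|Hn].
  by move: Ho; rewrite E odd_double.
apply: Hn; exists z.
have Hd : p %| p ^ (k - l) by rewrite dvdn_exp //; lia.
by rewrite modn_mod -Hz2 (modn_dvdm _ Hd).
Qed.

Lemma half_eq a b : a < b -> a = b - a -> b = a.*2.
Proof. lia. Qed.

Lemma tree_main p k : prime p -> odd p -> forall l x xt, 1 <= l < k -> coprime xt p ->
  x = xt * p ^ l -> x < p ^ k ->
  exists t, is_Tp p (xt %% p) l t /\ realizes (p ^ k) (sqmod (p ^ k)) x t.
Proof.
move=> Pp Op l; elim/ltn_ind: l => l IH x xt /andP [Hl1 Hlk] Hxt Hx Hxk.
have p0 := prime_gt0 Pp.
have p1 := prime_gt1 Pp.
have Hnone : (odd l \/ ~ (exists z, z ^ 2 = xt %% p %[mod p])) ->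
    exists t, is_Tp p (xt %% p) l t /\ realizes (p ^ k) (sqmod (p ^ k)) x t.
  move=> Hc; exists (RNode [::]); split.
    case: Hc => [Ho|Hn]; first exact: Tp_odd.
    case: (boolP (odd l)) => Ho; first exact: Tp_odd.
    exact: Tp_nonsq.
  rewrite realizesE; exists [::]; split => // c.
  by rewrite in_nil (negbTE (no_children _ Pp Hlk Hl1 Hxt Hx Hc)) andbF.
case: (boolP (odd l)) => Ho; first by apply: Hnone; left.
case: (Classical_Prop.classic (exists z, z ^ 2 = xt %% p %[mod p])) => Hsq; last first.
  by apply: Hnone; right.
have [z0 Hz0] := Hsq.
pose z1 := z0 %% p.
pose m := l./2.
pose e := k - l.
have Hlm : l = m.*2 by rewrite -{1}(odd_double_half l) (negbTE Ho).
have m1 : 0 < m by lia.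
have mlt : m < l by lia.
have e0 : 0 < e by rewrite /e; lia.
have pm0 : 0 < p ^ m by rewrite expn_gt0 p0.
have pe0 : 0 < p ^ e by rewrite expn_gt0 p0.
have pl0 : 0 < p ^ l by rewrite expn_gt0 p0.
have Hkl : p ^ k = p ^ e * p ^ l by rewrite -expnD /e subnK //; exact: ltnW.
have Hkm : p ^ (k - m) = p ^ e * p ^ m by rewrite -expnD /e; congr (_ ^ _); lia.
have Hkm2 : p ^ k = p ^ (k - m) * p ^ m by rewrite -expnD subnK //; lia.
have Hxe : xt < p ^ e by rewrite -(ltn_pmul2r pl0) -Hx -Hkl.
have Hxp : xt %% p = z1 ^ 2 %% p by rewrite /z1 modnXm Hz0 modn_mod.
have cop_small w : 0 < w < p -> coprime w p.
  move=> /andP [w0 wp]; rewrite coprime_sym prime_coprime //; apply/negP => /dvd_small0 H.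
  by have := H wp; lia.
have z1p : z1 < p by rewrite ltn_mod.
have z1nz : 0 < z1.
  case E: z1 => [|//]; move: Hxt; rewrite coprime_sym prime_coprime // /dvdn Hxp E.
  by rewrite exp0n // mod0n.
have cz1 : coprime z1 p by apply: cop_small; rewrite z1nz z1p.
pose z2 := p - z1.
have z2nz : 0 < z2 < p by rewrite /z2; lia.
have z2p : z2 < p by case/andP: z2nz.
have cz2 : coprime z2 p by apply: cop_small.
have Hxp2 : xt %% p = z2 ^ 2 %% p by rewrite Hxp /z2 sq_neg //; exact: ltnW.
have z12 : z1 != z2.
  apply/eqP => E; have Ep : p = z1.*2 by exact: half_eq z1p E.
  by rewrite Ep odd_double in Op.
have [s1 Hs1 [Hs1p Hs1x]] := hensel Pp Op e0 cz1 z1p Hxe Hxp.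
have [s2 Hs2 [Hs2p Hs2x]] := hensel Pp Op e0 cz2 z2p Hxe Hxp2.
pose cs (s : nat) := map (fun y => y * p ^ m) (filter (fun y => y %% p ^ e == s) (iota 0 (p ^ (k - m)))).
have size_cs s : s < p ^ e -> size (cs s) = p ^ m.
  by move=> Hs; rewrite size_map size_filter Hkm; apply: count_mod.
have mem_cs s c : c \in cs s -> exists y, [/\ c = y * p ^ m, y < p ^ (k - m) & y %% p ^ e = s].
  by move=> /mapP [y]; rewrite mem_filter mem_iota => /andP [/eqP H1 /andP [_ H2]] ->; exists y.
have child s zi : coprime zi p -> s %% p = zi -> s ^ 2 %% p ^ e = xt -> forall c, c \in cs s ->
    [/\ c < p ^ k, sqmod (p ^ k) c = x & exists t, is_Tp p zi m t /\ realizes (p ^ k) (sqmod (p ^ k)) c t].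
  move=> czi Hsp Hsx c /mem_cs [y [Hc Hy Hys]].
  have Hd : p %| p ^ e by rewrite dvdn_exp.
  have Hyp : y %% p = zi by rewrite -(modn_dvdm _ Hd) Hys.
  have cy : coprime y p by rewrite -coprime_modl Hyp.
  have ck : c < p ^ k by rewrite Hc Hkm2 ltn_pmul2r.
  have cx : sqmod (p ^ k) c = x.
    rewrite /sqmod Hc sq_mul //; last by rewrite -Hlm; exact: ltnW.
    by rewrite -Hlm -/e -(modnXm 2 (p ^ e) y) Hys Hsx Hx.
  split => //.
  have mk : 1 <= m < k by rewrite m1 (ltn_trans mlt Hlk).
  have [t [Ht Hr]] := IH m mlt c y mk cy Hc ck.
  by exists t; rewrite -Hyp.
have char c : (c \in cs s1 ++ cs s2) = (c < p ^ k) && (sqmod (p ^ k) c == x).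
  apply/idP/idP.
    rewrite mem_cat => /orP [H|H].
      by have [-> -> _] := child s1 z1 cz1 Hs1p Hs1x c H; rewrite eqxx.
    by have [-> -> _] := child s2 z2 cz2 Hs2p Hs2x c H; rewrite eqxx.
  move=> /andP [ck /eqP cx].
  rewrite /sqmod Hx in cx.
  have [y cy [_ Hc Hy2]] := val_sq Pp Hlk Hxt cx.
  rewrite -/m -/e in Hc Hy2.
  have Hy : y < p ^ (k - m) by rewrite -(ltn_pmul2r pm0) -Hc -Hkm2.
  have Hd : p %| p ^ e by rewrite dvdn_exp.
  have Hr : (y %% p) ^ 2 = z1 ^ 2 %[mod p] by rewrite modnXm -Hxp -Hy2 (modn_dvdm _ Hd).
  have yin s : s < p ^ e -> s %% p = y %% p -> s ^ 2 %% p ^ e = xt -> c \in cs s.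
    move=> Hs Hsp Hsx; apply/mapP; exists y => //.
    rewrite mem_filter mem_iota Hy andbT /=.
    have := sq_uniq Pp Op cy (esym Hsp) (etrans Hy2 (esym Hsx)).
    by rewrite (modn_small Hs) => ->; rewrite eqxx.
  have z1r : 0 < z1 < p by rewrite z1nz z1p.
  have [E|E] := two_roots Pp z1r (ltn_pmod y p0) Hr.
    by rewrite mem_cat yin // Hs1p E.
  by rewrite mem_cat (yin s2) ?orbT // Hs2p E.
have inj : injective (fun y => y * p ^ m) by move=> a b /eqP; rewrite eqn_pmul2r // => /eqP.
have ucs s : uniq (cs s) by rewrite map_inj_uniq // filter_uniq // iota_uniq.
have Hu : uniq (cs s1 ++ cs s2).
  rewrite cat_uniq !ucs andbT /=; apply/hasPn => c H2; apply/negP => H1.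
  have [y1 [E1 _ Hy1]] := mem_cs _ _ H1; have [y2 [E2 _ Hy2]] := mem_cs _ _ H2.
  rewrite E1 in E2; have ey := inj _ _ E2.
  move/eqP: z12; apply; rewrite -Hs1p -Hs2p -Hy1 -Hy2 ey.
  by [].
have B1 : forall c, c \in cs s1 -> exists t, is_Tp p z1 m t /\ realizes (p ^ k) (sqmod (p ^ k)) c t.
  by move=> c H; have [_ _ E] := child s1 z1 cz1 Hs1p Hs1x c H.
have B2 : forall c, c \in cs s2 -> exists t, is_Tp p z2 m t /\ realizes (p ^ k) (sqmod (p ^ k)) c t.
  by move=> c H; have [_ _ E] := child s2 z2 cz2 Hs2p Hs2x c H.
have [ts1 [Hts1 HP1 Hr1]] := build B1.
have [ts2 [Hts2 HP2 Hr2]] := build B2.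
exists (RNode (ts1 ++ ts2)); split.
  apply: (Tp_sq (z1:=z1) (z2:=z2)) => //.
  - by rewrite z1nz z1p.
  - by rewrite modn_mod Hxp.
  - by rewrite modn_mod Hxp2.
  - by rewrite Hts1 size_cs.
  - by rewrite Hts2 size_cs.
rewrite realizesE; exists (cs s1 ++ cs s2); split => //.
exact: r2_cat.
Qed.


Lemma half_le k l : ((k.+1)./2 <= l) = (k <= l * 2).
Proof. apply/idP/idP; lia. Qed.

Theorem theorem9 (p k : nat) :
  prime p -> odd p -> 1 <= k ->
  [/\ grounded_tree (Nverts p k) (sqmod (p ^ k)) 0,
      size (Nverts p k) = p ^ (k - 1),
      (forall x : nat,
         (x \in Nverts p k) && (x != 0) && (sqmod (p ^ k) x == 0) <->
         exists l y : nat,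
           [/\ (k.+1)./2 <= l < k, 1 <= y <= p ^ (k - l), coprime y p &
               x = y * p ^ l]) &
      (forall x xt l : nat,
         x \in Nverts p k -> x != 0 ->
         1 <= l < k -> coprime xt p -> x = xt * p ^ l ->
         exists t : rtree,
           is_Tp p (xt %% p) l t /\ realizes (p ^ k) (sqmod (p ^ k)) x t)].
Proof.
move=> Pp Op Hk.
have p0 := prime_gt0 Pp.
have p1 := prime_gt1 Pp.
have pk0 : 0 < p ^ k by rewrite expn_gt0 p0.
have Hd : p %| p ^ k by rewrite dvdn_exp.
have memN x : (x \in Nverts p k) = (x < p ^ k) && (p %| x).
  by rewrite /Nverts mem_filter mem_iota /= andbC.
have Hcl : forall x, x \in Nverts p k -> sqmod (p ^ k) x \in Nverts p k.
  move=> x; rewrite !memN => /andP [_ Hx]; rewrite /sqmod ltn_pmod //=.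
  by rewrite /dvdn (modn_dvdm _ Hd) -/(dvdn p (x ^ 2)) dvdn_exp.
have H0 : 0 \in Nverts p k by rewrite memN pk0 dvdn0.
have Hf0 : sqmod (p ^ k) 0 = 0 by rewrite /sqmod exp0n // mod0n.
have Hreach : forall x, x \in Nverts p k -> exists j, iter j (sqmod (p ^ k)) x = 0.
  move=> x; rewrite memN => /andP [_ Hx]; exists k.
  rewrite -(prednK Hk) iter_sq prednK //.
  apply/eqP; rewrite -/(dvdn (p ^ k) _).
  have [q ->] := dvdnP Hx.
  by rewrite expnMn dvdn_mull // dvdn_exp2l // ltnW // ltn_expl.
split.
- split => //.
  + by rewrite filter_uniq // iota_uniq.
  + exact: generic_tree.
- exact: size_Nverts.
- move=> x; split.
    move=> /andP [/andP [Hx Hx0] Hsq].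
    rewrite memN in Hx; case/andP: Hx => Hxk Hpx.
    have x0 : 0 < x by rewrite lt0n.
    have [y Hy Hxy] := pfactor_coprime Pp x0.
    rewrite coprime_sym in Hy.
    exists (logn p x), y.
    have y0 := cop_pos Pp Hy.
    have pl0 : 0 < p ^ logn p x by rewrite expn_gt0 p0.
    have Hlk : logn p x < k.
      rewrite -(ltn_exp2l _ _ p1); apply: leq_ltn_trans Hxk.
      by rewrite {2}Hxy leq_pmull.
    have Hkl : p ^ k = p ^ (k - logn p x) * p ^ logn p x by rewrite -expnD subnK // ltnW.
    split => //.
    + rewrite Hlk andbT half_le.
      have : p ^ k %| x ^ 2 by rewrite /dvdn; rewrite /sqmod in Hsq.
      by rewrite pfactor_dvdn ?expn_gt0 ?x0 // lognX mulnC.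
    + by rewrite y0 /= ltnW // -(ltn_pmul2r pl0) -Hxy -Hkl.
  move=> [l [y [/andP [Hl1 Hlk] /andP [y1 y2] Hy Hx]]].
  have l1 : 0 < l by move: Hl1 Hk; clear; lia.
  have pl0 : 0 < p ^ l by rewrite expn_gt0 p0.
  have Hkl : p ^ k = p ^ (k - l) * p ^ l by rewrite -expnD subnK // ltnW.
  have y3 : y < p ^ (k - l).
    rewrite ltn_neqAle y2 andbT; apply/eqP => E.
    move: Hy; rewrite E coprime_sym prime_coprime // dvdn_exp //.
    by move: Hlk; clear; lia.
  have A1 : x < p ^ k by rewrite Hx Hkl ltn_pmul2r.
  have A2 : p %| x by rewrite Hx dvdn_mull // dvdn_exp.
  have A3 : x != 0 by rewrite Hx muln_eq0 negb_or -!lt0n y1 pl0.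
  have A4 : p ^ k %| x ^ 2.
    by rewrite Hx expnMn dvdn_mull // -expnM dvdn_exp2l // -half_le.
  by rewrite memN A1 A2 A3 /sqmod -/(dvdn (p ^ k) _) A4.
- move=> x xt l Hx Hx0 Hl Hc Hxe.
  rewrite memN in Hx; case/andP: Hx => Hxk _.
  exact: (@tree_main p k Pp Op l x xt Hl Hc Hxe Hxk).
Qed.
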